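(* Let $k$ be an algebraically closed field of characteristic $2$, $S=\mathbf{V}(g)\subset\mathbb{A}^3$ with $g = x^2+y^2z+yz^2+xyz$, and $m\ge 5$. Let $R_m = k[x_0,\dots,x_m,y_0,\dots,y_m,z_0,\dots,z_m]$, $(\mathbb{A}^3)_m=\mathrm{Spec}\,R_m$, and define $g^{(j)}\in R_m$ by $g(\sum_{i=0}^m x_it^i,\sum_{i=0}^m y_it^i,\sum_{i=0}^m z_it^i)=\sum_{j=0}^m g^{(j)}t^j$ in $R_m[t]/\langle t^{m+1}\rangle$. Let $S_m^0=\mathbf{V}(x_0,y_0,z_0,g^{(0)},\dots,g^{(m)})$ be the singular fiber of the $m$-th jet scheme of $S$. Define $I_m^0 = \langle x_0,x_1,x_2,y_0,y_1,z_0,z_1\rangle + \langle g^{(0)},\dots,g^{(m)}\rangle$, $I_m^1 = J_m^1 (R_m)_{z_1}\cap R_m$, $I_m^2 = J_m^2 (R_m)_{y_1}\cap R_m$, $I_m^3 = J_m^3 (R_m)_{y_1}\cap R_m$, where $J_m^1 = \langle x_0,x_1,y_0,y_1,z_0\rangle + \langle g^{(0)},\dots,g^{(m)}\rangle$, $J_m^2 = \langle x_0,x_1,y_0,z_0,z_1\rangle + \langle g^{(0)},\dots,g^{(m)}\rangle$, $J_m^3 = \langle x_0,x_1,y_0,z_0,y_1+z_1\rangle + \langle g^{(0)},\dots,g^{(m)}\rangle$, and $Z_m^i=\mathbf{V}(I_m^i)$ for $i=0,1,2,3$ (these are the irreducible components of $S_m^0$). Then the maximal elements of $\{Z_m^i\cap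 Z_m^j\mid i,j\in\{0,1,2,3\},\ i\ne j\}$ with respect to inclusion are $Z_m^0\cap Z_m^1$, $Z_m^0\cap Z_m^2$ and $Z_m^0\cap Z_m^3$, and they are pairwise distinct. In particular, $Z_m^1\cap Z_m^2,\ Z_m^2\cap Z_m^3,\ Z_m^3\cap Z_m^1\subsetneq Z_m^0$.
   Context: $(R_m)_h$ is the localization at powers of $h$, $J(R_m)_h\cap R_m$ the preimage in $R_m$ of the extended ideal, and $\mathbf{V}(\cdot)$ the zero set in $(\mathbb{A}^3)_m$. *)

(* Defs.v *)
From mathcomp Require Import all_boot all_algebra.
From mathcomp Require Import mpoly.
Set Implicit Arguments. Unset Strict Implicit. Unset Printing Implicit Defensive.
Import GRing.Theory.
Local Open Scope ring_scope.

Section JetDefs.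
Variable (k : closedFieldType) (m : nat).

Definition nvar : nat := (3 * m.+1)%N.
Definition Rm := {mpoly k[nvar]}.

Definition xv (i : nat) : Rm := 'X_(inord i).
Definition yv (i : nat) : Rm := 'X_(inord (m.+1 + i)).
Definition zv (i : nat) : Rm := 'X_(inord (2 * m.+1 + i)).

Definition arc (v : nat -> Rm) : {poly Rm} := \sum_(i < m.+1) (v i)%:P * 'X^i.

Definition garc : {poly Rm} :=
  let X := arc xv in let Y := arc yv in let Z := arc zv in
  X ^+ 2 + Y ^+ 2 * Z + Y * Z ^+ 2 + X * Y * Z.

(* g^(j): coefficient of t^j (for j <= m this is the coefficient in R_m[t]/<t^(m+1)>) *)
Definition gj (j : nat) : Rm := garc`_j.

Definition gjs : seq Rm := [seq gj j | j <- iota 0 m.+1].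

Definition in_ideal (s : seq Rm) (f : Rm) : Prop :=
  exists c : 'I_(size s) -> Rm, f = \sum_(i < size s) c i * s`_i.

(* J (R_m)_h \cap R_m : the saturation of <s> by h *)
Definition in_sat (s : seq Rm) (h f : Rm) : Prop :=
  exists e : nat, in_ideal s (h ^+ e * f).

Definition I0 : Rm -> Prop :=
  in_ideal ([:: xv 0; xv 1; xv 2; yv 0; yv 1; zv 0; zv 1] ++ gjs).
Definition J1 : seq Rm := [:: xv 0; xv 1; yv 0; yv 1; zv 0] ++ gjs.
Definition J2 : seq Rm := [:: xv 0; xv 1; yv 0; zv 0; zv 1] ++ gjs.
Definition J3 : seq Rm := [:: xv 0; xv 1; yv 0; zv 0; yv 1 + zv 1] ++ gjs.
Definition I1 : Rm -> Prop := in_sat J1 (zv 1).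
Definition I2 : Rm -> Prop := in_sat J2 (yv 1).
Definition I3 : Rm -> Prop := in_sat J3 (yv 1).

Definition Iideal (i : 'I_4) : Rm -> Prop :=
  match val i with 0 => I0 | 1 => I1 | 2 => I2 | _ => I3 end.

(* k-points of (A^3)_m = Spec R_m *)
Definition point := 'I_nvar -> k.

Definition zeroset (I : Rm -> Prop) : point -> Prop :=
  fun v => forall f, I f -> f.@[v] = 0.

Definition Z (i : 'I_4) : point -> Prop := zeroset (Iideal i).

Definition ZZ (i j : 'I_4) : point -> Prop := fun v => Z i v /\ Z j v.

End JetDefs.

Definition psubset (T : Type) (A B : T -> Prop) := forall v, A v -> B v.
Definition pseteq (T : Type) (A B : T -> Prop) := forall v, A v <-> B v.

Definition maximal_pair (T : Type) (F : 'I_4 -> 'I_4 -> T -> Prop) (A : T -> Prop) :=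
  (exists i j, i <> j /\ pseteq A (F i j)) /\
  (forall i j, i <> j -> psubset A (F i j) -> pseteq (F i j) A).

(* Main.v *)
Require Import Defs.
From mathcomp Require Import all_boot all_algebra.
From mathcomp Require Import mpoly.
From mathcomp Require Import ring zify.
Set Implicit Arguments. Unset Strict Implicit. Unset Printing Implicit Defensive.
Import GRing.Theory.
Local Open Scope ring_scope.

Lemma combi (T : Type) (Zf : 'I_4 -> T -> Prop) (W : 'I_4 -> 'I_4 -> T -> Prop)
  (i0 i1 i2 i3 : 'I_4) :
  (forall i j v, W i j v <-> Zf i v /\ Zf j v) ->
  (forall i : 'I_4, [\/ i = i0, i = i1, i = i2 | i = i3]) ->
  i0 <> i1 -> i0 <> i2 -> i0 <> i3 -> i1 <> i2 -> i1 <> i3 -> i2 <> i3 ->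
  (forall v, Zf i1 v -> Zf i2 v -> Zf i0 v) ->
  (forall v, Zf i2 v -> Zf i3 v -> Zf i0 v) ->
  (forall v, Zf i3 v -> Zf i1 v -> Zf i0 v) ->
  forall p1 p2 p3,
  Zf i0 p1 -> Zf i1 p1 -> ~ Zf i2 p1 -> ~ Zf i3 p1 ->
  Zf i0 p2 -> Zf i2 p2 -> ~ Zf i1 p2 -> ~ Zf i3 p2 ->
  Zf i0 p3 -> Zf i3 p3 -> ~ Zf i1 p3 -> ~ Zf i2 p3 ->
  (forall A, maximal_pair W A <->
     (pseteq A (W i0 i1) \/ pseteq A (W i0 i2) \/ pseteq A (W i0 i3))) /\
  ~ pseteq (W i0 i1) (W i0 i2) /\ ~ pseteq (W i0 i2) (W i0 i3) /\
  ~ pseteq (W i0 i1) (W i0 i3) /\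
  (psubset (W i1 i2) (Zf i0) /\ ~ pseteq (W i1 i2) (Zf i0)) /\
  (psubset (W i2 i3) (Zf i0) /\ ~ pseteq (W i2 i3) (Zf i0)) /\
  (psubset (W i3 i1) (Zf i0) /\ ~ pseteq (W i3 i1) (Zf i0)).
Proof.
move=> HW cov n01 n02 n03 n12 n13 n23 s12 s23 s31 p1 p2 p3
  a0 a1 a2 a3 b0 b2 b1 b3 c0 c3 c1 c2.
have sub0 : forall i j v, i <> j -> W i j v -> Zf i0 v.
  move=> i j v nij /HW [Hi Hj].
  case: (cov i) => ei; case: (cov j) => ej; move: Hi Hj nij; rewrite ei ej => Hi Hj nij //;
  by [ apply: s12 | apply: s23 | apply: s31 | congruence ].
have Wsym : forall i j, pseteq (W i j) (W j i).
  by move=> i j v; rewrite !HW; tauto.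
have wit : forall x, x <> i0 -> exists p, Zf i0 p /\ Zf x p /\
    (forall y, Zf y p -> y = i0 \/ y = x).
  move=> x nx; case: (cov x) => ex; rewrite ex; first by rewrite ex in nx.
  - exists p1; do 2 split => //; move=> y; case: (cov y) => -> Hy; by [left | right | exfalso; auto].
  - exists p2; do 2 split => //; move=> y; case: (cov y) => -> Hy; by [left | right | exfalso; auto].
  - exists p3; do 2 split => //; move=> y; case: (cov y) => -> Hy; by [left | right | exfalso; auto].
have maxW : forall x, x <> i0 -> maximal_pair W (W i0 x).
  move=> x nx; split; first by exists i0, x; split => // /esym.
  move=> i j nij Hs.
  have [p [P0 [Px Py]]] := wit x nx.
  have /HW [Hi Hj] : W i j p by apply: Hs; apply/HW.
  case: (Py _ Hi) => ei; case: (Py _ Hj) => ej; rewrite ei ej; rewrite ei ej in nij; try congruence.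
  - by move=> v.
  - exact: Wsym.
have neq : forall x y, x <> i0 -> y <> i0 -> x <> y -> ~ pseteq (W i0 x) (W i0 y).
  move=> x y nx ny nxy E.
  have [p [P0 [Px Py]]] := wit x nx.
  have /E /HW [_ Hy] : W i0 x p by apply/HW.
  by case: (Py _ Hy) => // /esym.
split.
  move=> A; split.
    move=> [[i [j [nij EA]]] Hmax].
    have key : forall x, x <> i0 -> psubset A (W i0 x) -> pseteq A (W i0 x).
      move=> x nx Hs v; split; first exact: Hs.
      by move/(Hmax _ _ (fun e => nx (esym e)) Hs).
    have toI : forall x, x <> i0 -> pseteq A (W i0 x) ->
        pseteq A (W i0 i1) \/ pseteq A (W i0 i2) \/ pseteq A (W i0 i3).
      move=> x nx E; case: (cov x) => ex; rewrite ex in nx E;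
      by [left | right; left | right; right | ].
    case: (eqVneq i i0) => [ei|ni].
      rewrite ei in nij EA; apply: (toI j) => [ej|]; first by apply: nij; rewrite ej.
      by [].
    apply: (toI i) => [ei|]; first by rewrite ei eqxx in ni.
    apply: key => [ei|v /EA Hv]; first by rewrite ei eqxx in ni.
    apply/HW; split; first exact: (sub0 _ _ _ nij Hv).
    by case/HW: Hv.
  have ni1 : i1 <> i0 by move/esym.
  have ni2 : i2 <> i0 by move/esym.
  have ni3 : i3 <> i0 by move/esym.
  have congr_max : forall B C, pseteq B C -> maximal_pair W C -> maximal_pair W B.
    move=> B C BC [[i [j [nij E]]] Hm]; split.
      by exists i, j; split => // v; rewrite BC E.
    move=> i' j' n' Hs v; rewrite BC; apply: Hm => // w /BC; exact: Hs.
  case=> [E|[E|E]]; apply: (congr_max _ _ E); exact: maxW.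
have ni1 : i1 <> i0 by move/esym.
have ni2 : i2 <> i0 by move/esym.
have ni3 : i3 <> i0 by move/esym.
split; first exact: neq.
split; first exact: neq.
split; first exact: neq.
split; [split|split; [split|split]].
- by move=> v; apply: sub0.
- by move=> E; have /E /HW [] := c0.
- by move=> v; apply: sub0.
- by move=> E; have /E /HW [] := a0.
- by move=> v; apply: sub0 => /esym.
- by move=> E; have /E /HW [] := b0.
Qed.

Section Main.
Variables (k : closedFieldType) (m : nat).
Hypothesis hk : 2%N \in [pchar k].
Hypothesis hm : (5 <= m)%N.

Local Notation R := (Rm k m).
Local Notation xx := (xv k m).
Local Notation yy := (yv k m).
Local Notation zz := (zv k m).
Local Notation pt := (point k m).
Local Notation arcR := (@Defs.arc k m).

Lemma two0 : (2%:R : k) = 0. Proof. exact: pcharf0 hk. Qed.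
Lemma two0R : (2%:R : R) = 0. Proof. by rewrite -mpolyC_nat two0. Qed.
Lemma two0P : (2%:R : {poly k}) = 0. Proof. by rewrite -polyC_natr two0. Qed.

Definition c2 (u w : nat -> R) (j : nat) := \sum_(a < j.+1) u a * w (j - a)%N.

Lemma coef_arc v i : (arcR v)`_i = if (i < m.+1)%N then v i else 0.
Proof.
have -> : arcR v = \poly_(i < m.+1) v i.
  by rewrite poly_def /Defs.arc; apply: eq_bigr => j _; rewrite mul_polyC.
by rewrite coef_poly.
Qed.

Lemma coefM_c2 (p q : {poly R}) u w j :
  (forall i, (i <= j)%N -> p`_i = u i) -> (forall i, (i <= j)%N -> q`_i = w i) ->
  (p * q)`_j = c2 u w j.
Proof.
move=> Hp Hq; rewrite coefM /c2; apply: eq_bigr => a _.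
have ha : (a <= j)%N by rewrite -ltnS; exact: ltn_ord.
by rewrite (Hp _ ha) (Hq _ (leq_subr a j)).
Qed.

Definition gform (X Y Z : nat -> R) j :=
  c2 X X j + c2 (c2 Y Y) Z j + c2 Y (c2 Z Z) j + c2 (c2 X Y) Z j.

Lemma coef_G (X Y Z : {poly R}) u v w j :
  (forall i, (i <= j)%N -> X`_i = u i) -> (forall i, (i <= j)%N -> Y`_i = v i) ->
  (forall i, (i <= j)%N -> Z`_i = w i) ->
  (X ^+ 2 + Y ^+ 2 * Z + Y * Z ^+ 2 + X * Y * Z)`_j = gform u v w j.
Proof.
move=> HX HY HZ; rewrite !coefD !expr2 /gform.
have W (P : nat -> Prop) i l : (forall i, (i <= j)%N -> P i) -> (i <= l)%N -> (l <= j)%N -> P i.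
  by move=> H hil hl; apply: H; exact: leq_trans hil hl.
congr (_ + _ + _ + _).
- exact: coefM_c2.
- apply: coefM_c2 => [i hi|i hi]; last exact: HZ.
  by apply: coefM_c2 => l hl; [apply: HY; exact: leq_trans hl hi|apply: HY; exact: leq_trans hl hi].
- apply: coefM_c2 => [i hi|i hi]; first exact: HY.
  by apply: coefM_c2 => l hl; apply: HZ; exact: leq_trans hl hi.
- apply: coefM_c2 => [i hi|i hi]; last exact: HZ.
  by apply: coefM_c2 => l hl; [apply: HX; exact: leq_trans hl hi|apply: HY; exact: leq_trans hl hi].
Qed.

Lemma gjE j : (j <= m)%N -> gj k m j = gform xx yy zz j.
Proof.
move=> hj; rewrite /gj /garc.
have HA v i : (i <= j)%N -> (arcR v)`_i = v i.
  by move=> hi; rewrite coef_arc ltnS (leq_trans hi hj).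
by apply: coef_G => i hi; apply: HA.
Qed.

Lemma g5E : gj k m 5 = gform xx yy zz 5.
Proof. exact: gjE. Qed.




Local Notation gjs := (gjs k m).
Local Notation gjR := (gj k m).

Lemma in_ideal_add (s : seq R) f r i : (i < size s)%N -> in_ideal s f -> in_ideal s (r * s`_i + f).
Proof.
move=> hi [c Hc]; exists (fun l => (if val l == i then r else 0) + c l).
rewrite Hc; symmetry.
under eq_bigr => l _ do rewrite mulrDl.
rewrite big_split /=; congr (_ + _).
rewrite (bigD1 (Ordinal hi)) //= eqxx big1 ?addr0 // => l hl.
case: eqP => [e|_]; last by rewrite mul0r.
have el : l = Ordinal hi by apply: val_inj.
by rewrite el eqxx in hl.
Qed.

Lemma in_ideal0 (s : seq R) : in_ideal s 0.
Proof. by exists (fun _ => 0); rewrite big1 // => l _; rewrite mul0r. Qed.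

Lemma size_gjs : size gjs = m.+1.
Proof. by rewrite /Defs.gjs size_map size_iota. Qed.

Lemma nth_gjs (lin : seq R) j : (j <= m)%N -> (lin ++ gjs)`_(size lin + j) = gjR j.
Proof.
move=> hj; rewrite nth_cat ltnNge leq_addr /= addKn /Defs.gjs (nth_map 0%N).
  by rewrite nth_iota.
by rewrite size_iota.
Qed.

Lemma size_lin_gjs (lin : seq R) i : (i < size lin + m.+1)%N -> (i < size (lin ++ gjs))%N.
Proof. by rewrite size_cat size_gjs. Qed.


Lemma in_ideal_g (lin : seq R) j c f : (j <= m)%N -> in_ideal (lin ++ gjs) f ->
  in_ideal (lin ++ gjs) (c * gjR j + f).
Proof.
move=> hj H; rewrite -(nth_gjs lin hj); apply: in_ideal_add => //.
by apply: size_lin_gjs; rewrite ltn_add2l.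
Qed.

Definition mkpt (px py pz : nat -> k) : pt := fun i =>
  let n := nat_of_ord i in
  if (n < m.+1)%N then px n else if (n < 2 * m.+1)%N then py (n - m.+1)%N
  else pz (n - 2 * m.+1)%N.

Lemma val_inord_nvar i : (i < 3 * m.+1)%N -> nat_of_ord (inord i : 'I_(nvar m)) = i.
Proof. by move=> hi; rewrite inordK //; rewrite /nvar; lia. Qed.

Lemma ev_x px py pz i : (i <= m)%N -> (xx i).@[mkpt px py pz] = px i.
Proof.
move=> hi; rewrite /xv mevalXU /mkpt val_inord_nvar; last lia.
by rewrite ifT //; lia.
Qed.

Lemma ev_y px py pz i : (i <= m)%N -> (yy i).@[mkpt px py pz] = py i.
Proof.
move=> hi; rewrite /yv mevalXU /mkpt val_inord_nvar; last lia.
rewrite ifF; last lia. rewrite ifT; last lia. congr py; lia.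
Qed.

Lemma ev_z px py pz i : (i <= m)%N -> (zz i).@[mkpt px py pz] = pz i.
Proof.
move=> hi; rewrite /zv mevalXU /mkpt val_inord_nvar; last lia.
rewrite ifF; last lia. rewrite ifF; last lia. congr pz; lia.
Qed.

Definition arck (c : nat -> k) : {poly k} := \sum_(i < m.+1) (c i)%:P * 'X^i.
Definition Gk (X Y Z : {poly k}) := X ^+ 2 + Y ^+ 2 * Z + Y * Z ^+ 2 + X * Y * Z.

Lemma Gmap (F : {rmorphism {poly R} -> {poly k}}) (X Y Z : {poly R}) :
  F (X ^+ 2 + Y ^+ 2 * Z + Y * Z ^+ 2 + X * Y * Z) = Gk (F X) (F Y) (F Z).
Proof. by rewrite /Gk !rmorphD !rmorphM. Qed.

Lemma map_arc px py pz c (v : nat -> R) :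
  (forall i, (i <= m)%N -> (v i).@[mkpt px py pz] = c i) ->
  map_poly (meval (mkpt px py pz)) (arcR v) = arck c.
Proof.
move=> H; rewrite /Defs.arc /arck rmorph_sum; apply: eq_bigr => i _.
rewrite rmorphM /= map_polyC map_polyXn /= H //.
by rewrite -ltnS.
Qed.

Lemma ev_gj px py pz j :
  (gjR j).@[mkpt px py pz] = (Gk (arck px) (arck py) (arck pz))`_j.
Proof.
rewrite /gj -(coef_map (meval (mkpt px py pz))) /garc.
rewrite Gmap.
congr (_`_j); congr Gk; apply: map_arc => i hi; [exact: ev_x | exact: ev_y | exact: ev_z].
Qed.

Lemma arck0 : arck (fun _ => 0) = 0.
Proof. by rewrite /arck big1 // => i _; rewrite mul0r. Qed.

Lemma gj_van px py pz j : (forall i, px i = 0) ->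
  ((forall i, py i = 0) \/ (forall i, pz i = 0) \/ (forall i, py i = pz i)) ->
  (gjR j).@[mkpt px py pz] = 0.
Proof.
move=> Hx Hyz; rewrite ev_gj.
have -> : arck px = 0 by rewrite -arck0; apply: eq_bigr => i _; rewrite Hx.
have -> : Gk 0 (arck py) (arck pz) = 0; last by rewrite coef0.
case: Hyz => [Hy|[Hz|Hyz]].
- have -> : arck py = 0 by rewrite -arck0; apply: eq_bigr => i _; rewrite Hy.
  by rewrite /Gk; ring.
- have -> : arck pz = 0 by rewrite -arck0; apply: eq_bigr => i _; rewrite Hz.
  by rewrite /Gk; ring.
- have -> : arck py = arck pz by apply: eq_bigr => i _; rewrite Hyz.
  transitivity (2%:R * (arck pz) ^+ 3); first by rewrite /Gk; ring.
  by rewrite two0P ?mul0r.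
Qed.

Lemma in_ideal_ev (s : seq R) f v :
  (forall i, (i < size s)%N -> (s`_i).@[v] = 0) -> in_ideal s f -> f.@[v] = 0.
Proof.
move=> H [c ->]; rewrite rmorph_sum big1 // => i _.
by rewrite rmorphM /= H ?mulr0.
Qed.

Lemma van_lin_gjs (lin : seq R) v :
  (forall i, (i < size lin)%N -> (lin`_i).@[v] = 0) ->
  (forall j, (j <= m)%N -> (gjR j).@[v] = 0) ->
  forall i, (i < size (lin ++ gjs))%N -> ((lin ++ gjs)`_i).@[v] = 0.
Proof.
move=> Hl Hg i; rewrite size_cat size_gjs nth_cat; move=> hs; case: (ltnP i (size lin)) => hi.
  exact: Hl.
have hj : (i - size lin <= m)%N by lia.
rewrite /Defs.gjs (nth_map 0%N); last by rewrite size_iota ltnS.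
by rewrite nth_iota ?add0n ?Hg // ltnS.
Qed.

Lemma mevalpoly (f : R) (p w : pt) :
  exists P : {poly k}, forall t, P.[t] = f.@[fun i => p i + t * w i].
Proof.
exists (\sum_(mm <- msupp f) (f@_mm)%:P *
   \prod_(i < nvar m) ((p i)%:P + (w i)%:P * 'X) ^+ (mm i)) => t.
rewrite mevalE horner_sum; apply: eq_bigr => mm _.
rewrite hornerCM horner_prod; congr (_ * _); apply: eq_bigr => i _.
by rewrite horner_exp hornerD hornerC hornerCM hornerX mulrC.
Qed.

Lemma poly_van0 (P : {poly k}) : (forall t, t != 0 -> P.[t] = 0) -> P.[0] = 0.
Proof.
move=> H; case: (eqVneq P 0) => [->|nz]; first by rewrite horner0.
have h1 : size (P * 'X) = (size P).+1 by rewrite size_mulX.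
have hs : size (P * 'X + 1) != 1%N.
  rewrite size_addl h1; first by rewrite eqSS size_poly_eq0.
  by rewrite size_poly1 ltnS lt0n size_poly_eq0.
have [t /rootP] := closed_rootP (P * 'X + 1) hs.
rewrite hornerD hornerMX hornerC.
case: (eqVneq t 0) => [->|nt]; first by rewrite mulr0 add0r => /eqP; rewrite oner_eq0.
by rewrite H // mul0r add0r => /eqP; rewrite oner_eq0.
Qed.

Lemma curve (s : seq R) h f (p w : pt) :
  (forall t, t != 0 ->
    (forall i, (i < size s)%N -> (s`_i).@[fun j => p j + t * w j] = 0) /\
    h.@[fun j => p j + t * w j] != 0) ->
  in_sat s h f -> f.@[p] = 0.
Proof.
move=> H [e He]; have [P HP] := mevalpoly f p w.
have P0 : P.[0] = 0.
  apply: poly_van0 => t t0; have [H1 H2] := H t t0; rewrite HP.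
  have := in_ideal_ev H1 He; rewrite rmorphM rmorphXn /= => /eqP.
  by rewrite mulf_eq0 expf_eq0 (negbTE H2) andbF /= => /eqP.
rewrite -P0 HP; apply: meval_eq => j; by rewrite mul0r addr0.
Qed.

Lemma gen_sat (s : seq R) h i : (i < size s)%N -> in_sat s h (s`_i).
Proof.
move=> hi; exists 0%N; rewrite expr0 mul1r -[s`_i]addr0 -[s`_i]mul1r.
by apply: in_ideal_add => //; exact: in_ideal0.
Qed.

Lemma sat_van (s : seq R) h v : zeroset (in_sat s h) v ->
  forall i, (i < size s)%N -> (s`_i).@[v] = 0.
Proof. by move=> Hz i hi; apply: Hz; apply: gen_sat. Qed.
Lemma char2_drop (x y : R) : x + 2%:R * y = x.
Proof. by rewrite two0R mul0r addr0. Qed.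

Definition f1 : R := yy 2 ^+ 2 + zz 1 * yy 3 + xx 2 * yy 2.

Lemma f1_I1 : I1 f1.
Proof.
exists 1%N.
have E : (zz 1) ^+ 1 * f1 = (- (yy 5) * (zz 0) - (yy 4) * (zz 1) - (yy 3) * (zz 2) - (yy 2) * (zz 3) - (yy 1) * (zz 4) - (yy 0) * (zz 5) - 2%:R * (xx 5)) * (xx 0) + ((- (yy 4) * (zz 0) - (yy 3) * (zz 1) - (yy 2) * (zz 2) - (yy 1) * (zz 3) - (yy 0) * (zz 4) - 2%:R * (xx 4)) * (xx 1) + ((- 2%:R * (zz 2) * (zz 3) - 2%:R * (zz 1) * (zz 4) - 2%:R * (zz 0) * (zz 5) - 2%:R * (yy 5) * (zz 0) - 2%:R * (yy 4) * (zz 1) - 2%:R * (yy 3) * (zz 2) - 2%:R * (yy 2) * (zz 3) - 2%:R * (yy 1) * (zz 4) - (yy 0) * (zz 5) - (xx 5) * (zz 0) - (xx 4) * (zz 1) - (xx 3) * (zz 2) - (xx 2) * (zz 3)) * (yy 0) + ((- (zz 2)^+2 - 2%:R * (zz 1) * (zz 3) - 2%:R * (zz 0) * (zz 4) - 2%:R * (yy 4) * (zz 0) - 2%:R * (yy 3) * (zz 1) - 2%:R * (yy 2) * (zz 2) - (yy 1) * (zz 3) - (xx 4) * (zz 0) - (xx 3) * (zz 1) - (xx 2) * (zz 2)) * (yy 1) + ((- (yy 5) * (zz 0) - 2%:R * (yy 4) * (zz 1) - 2%:R * (yy 3) * (zz 2) - 2%:R * (yy 2) * (zz 3) - 2%:R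 * (yy 2) * (yy 3) - (xx 3) * (yy 2) - (xx 2) * (yy 3)) * (zz 0) + (1 * gjR 5 + 0))))).
  transitivity (((- (yy 5) * (zz 0) - (yy 4) * (zz 1) - (yy 3) * (zz 2) - (yy 2) * (zz 3) - (yy 1) * (zz 4) - (yy 0) * (zz 5) - 2%:R * (xx 5)) * (xx 0) + ((- (yy 4) * (zz 0) - (yy 3) * (zz 1) - (yy 2) * (zz 2) - (yy 1) * (zz 3) - (yy 0) * (zz 4) - 2%:R * (xx 4)) * (xx 1) + ((- 2%:R * (zz 2) * (zz 3) - 2%:R * (zz 1) * (zz 4) - 2%:R * (zz 0) * (zz 5) - 2%:R * (yy 5) * (zz 0) - 2%:R * (yy 4) * (zz 1) - 2%:R * (yy 3) * (zz 2) - 2%:R * (yy 2) * (zz 3) - 2%:R * (yy 1) * (zz 4) - (yy 0) * (zz 5) - (xx 5) * (zz 0) - (xx 4) * (zz 1) - (xx 3) * (zz 2) - (xx 2) * (zz 3)) * (yy 0) + ((- (zz 2)^+2 - 2%:R * (zz 1) * (zz 3) - 2%:R * (zz 0) * (zz 4) - 2%:R * (yy 4) * (zz 0) - 2%:R * (yy 3) * (zz 1) - 2%:R * (yy 2) * (zz 2) - (yy 1) * (zz 3) - (xx 4) * (zz 0) - (xx 3) * (zz 1) - (xx 2) * (zz 2)) * (yy 1) + ((- (yy 5) * (zz 0) - 2%:R * (yy 4) * (zz 1) - 2%:R * (yy 3) * (zz 2) - 2%:R * (yy 2) * (zz 3) - 2%:R * (yy 2) * (yy 3) - (xx 3) * (yy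 2) - (xx 2) * (yy 3)) * (zz 0) + (1 * gjR 5 + 0)))))) + 2%:R * (- (yy 2) * (zz 1) * (zz 2) - (xx 2) * (xx 3))); last exact: char2_drop.
  rewrite g5E /gform /c2 !big_ord_recr !big_ord0 /= /f1.
  ring.
rewrite E.
apply: (@in_ideal_add _ _ _ 0%N) => //.
apply: (@in_ideal_add _ _ _ 1%N) => //.
apply: (@in_ideal_add _ _ _ 2%N) => //.
apply: (@in_ideal_add _ _ _ 3%N) => //.
apply: (@in_ideal_add _ _ _ 4%N) => //.
apply: in_ideal_g => //.
exact: in_ideal0.
Qed.

Definition f2 : R := zz 2 ^+ 2 + yy 1 * zz 3 + xx 2 * zz 2.

Lemma f2_I2 : I2 f2.
Proof.
exists 1%N.
have E : (yy 1) ^+ 1 * f2 = (- (yy 5) * (zz 0) - (yy 4) * (zz 1) - (yy 3) * (zz 2) - (yy 2) * (zz 3) - (yy 1) * (zz 4) - (yy 0) * (zz 5) - 2%:R * (xx 5)) * (xx 0) + ((- (yy 4) * (zz 0) - (yy 3) * (zz 1) - (yy 2) * (zz 2) - (yy 1) * (zz 3) - (yy 0) * (zz 4) - 2%:R * (xx 4)) * (xx 1) + ((- 2%:R * (zz 2) * (zz 3) - 2%:R * (zz 1) * (zz 4) - 2%:R * (zz 0) * (zz 5) - 2%:R * (yy 5) * (zz 0) - 2%:R * (yy 4) * (zz 1) - 2%:R * (yy 3) * (zz 2) - 2%:R * (yy 2) * (zz 3) - 2%:R * (yy 1) * (zz 4) - (yy 0) * (zz 5) - (xx 5) * (zz 0)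 - (xx 4) * (zz 1) - (xx 3) * (zz 2) - (xx 2) * (zz 3)) * (yy 0) + ((- (yy 5) * (zz 0) - 2%:R * (yy 4) * (zz 1) - 2%:R * (yy 3) * (zz 2) - 2%:R * (yy 2) * (zz 3) - 2%:R * (yy 2) * (yy 3) - 2%:R * (yy 1) * (zz 4) - 2%:R * (yy 1) * (yy 4) - (xx 4) * (yy 1) - (xx 3) * (yy 2) - (xx 2) * (yy 3)) * (zz 0) + ((- (yy 3) * (zz 1) - 2%:R * (yy 2) * (zz 2) - (yy 2)^+2 - 2%:R * (yy 1) * (zz 3) - 2%:R * (yy 1) * (yy 3) - (xx 3) * (yy 1) - (xx 2) * (yy 2)) * (zz 1) + (1 * gjR 5 + 0))))).
  transitivity (((- (yy 5) * (zz 0) - (yy 4) * (zz 1) - (yy 3) * (zz 2) - (yy 2) * (zz 3) - (yy 1) * (zz 4) - (yy 0) * (zz 5) - 2%:R * (xx 5)) * (xx 0) + ((- (yy 4) * (zz 0) - (yy 3) * (zz 1) - (yy 2) * (zz 2) - (yy 1) * (zz 3) - (yy 0) * (zz 4) - 2%:R * (xx 4)) * (xx 1) + ((- 2%:R * (zz 2) * (zz 3) - 2%:R * (zz 1) * (zz 4) - 2%:R * (zz 0) * (zz 5) - 2%:R * (yy 5) * (zz 0) - 2%:R * (yy 4) * (zz 1) - 2%:R * (yy 3) * (zz 2) - 2%:R * (yy 2) * (zz 3) - 2%:R * (yy 1) * (zz 4) - (yy 0) * (zz 5) - (xx 5) * (zz 0) - (xx 4) * (zz 1) - (xx 3) * (zz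 2) - (xx 2) * (zz 3)) * (yy 0) + ((- (yy 5) * (zz 0) - 2%:R * (yy 4) * (zz 1) - 2%:R * (yy 3) * (zz 2) - 2%:R * (yy 2) * (zz 3) - 2%:R * (yy 2) * (yy 3) - 2%:R * (yy 1) * (zz 4) - 2%:R * (yy 1) * (yy 4) - (xx 4) * (yy 1) - (xx 3) * (yy 2) - (xx 2) * (yy 3)) * (zz 0) + ((- (yy 3) * (zz 1) - 2%:R * (yy 2) * (zz 2) - (yy 2)^+2 - 2%:R * (yy 1) * (zz 3) - 2%:R * (yy 1) * (yy 3) - (xx 3) * (yy 1) - (xx 2) * (yy 2)) * (zz 1) + (1 * gjR 5 + 0)))))) + 2%:R * (- (yy 1) * (yy 2) * (zz 2) - (xx 2) * (xx 3))); last exact: char2_drop.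
  rewrite g5E /gform /c2 !big_ord_recr !big_ord0 /= /f2.
  ring.
rewrite E.
apply: (@in_ideal_add _ _ _ 0%N) => //.
apply: (@in_ideal_add _ _ _ 1%N) => //.
apply: (@in_ideal_add _ _ _ 2%N) => //.
apply: (@in_ideal_add _ _ _ 3%N) => //.
apply: (@in_ideal_add _ _ _ 4%N) => //.
apply: in_ideal_g => //.
exact: in_ideal0.
Qed.

Definition f3 : R := yy 1 * (yy 3 + zz 3) + (yy 2 + zz 2) ^+ 2 + xx 3 * yy 1 + xx 2 * (yy 2 + zz 2).

Lemma f3_I3 : I3 f3.
Proof.
exists 1%N.
have E : (yy 1) ^+ 1 * f3 = (- (yy 5) * (zz 0) - (yy 4) * (zz 1) - (yy 3) * (zz 2) - (yy 2) * (zz 3) - (yy 1) * (zz 4) - (yy 0) * (zz 5) - 2%:R * (xx 5)) * (xx 0) + ((- (yy 4) * (zz 0) - (yy 3) * (zz 1) - (yy 2) * (zz 2) - (yy 1) * (zz 3) - (yy 0) * (zz 4) - 2%:R * (xx 4)) * (xx 1) + ((- 2%:R * (zz 2) * (zz 3) - 2%:R * (zz 1) * (zz 4) - 2%:R * (zz 0) * (zz 5) - 2%:R * (yy 5) * (zz 0) - 2%:R * (yy 4) * (zz 1) - 2%:R * (yy 3) * (zz 2) - 2%:R * (yy 2) * (zz 3) - 2%:R * (yy 1) * (zz 4) - (yy 0) * (zz 5) - (xx 5) * (zz 0) - (xx 4) * (zz 1) - (xx 3) * (zz 2) - (xx 2) * (zz 3)) * (yy 0) + ((- (yy 5) * (zz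 0) - 2%:R * (yy 4) * (zz 1) - 2%:R * (yy 3) * (zz 2) - 2%:R * (yy 2) * (zz 3) - 2%:R * (yy 2) * (yy 3) - 2%:R * (yy 1) * (zz 4) - 2%:R * (yy 1) * (yy 4) - (xx 4) * (yy 1) - (xx 3) * (yy 2) - (xx 2) * (yy 3)) * (zz 0) + ((- (yy 3) * (zz 1) - 2%:R * (yy 2) * (zz 2) - (yy 2)^+2 - 2%:R * (yy 1) * (zz 3) - (yy 1) * (yy 3) - (xx 3) * (yy 1) - (xx 2) * (yy 2)) * (yy 1 + zz 1) + (1 * gjR 5 + 0))))).
  transitivity (((- (yy 5) * (zz 0) - (yy 4) * (zz 1) - (yy 3) * (zz 2) - (yy 2) * (zz 3) - (yy 1) * (zz 4) - (yy 0) * (zz 5) - 2%:R * (xx 5)) * (xx 0) + ((- (yy 4) * (zz 0) - (yy 3) * (zz 1) - (yy 2) * (zz 2) - (yy 1) * (zz 3) - (yy 0) * (zz 4) - 2%:R * (xx 4)) * (xx 1) + ((- 2%:R * (zz 2) * (zz 3) - 2%:R * (zz 1) * (zz 4) - 2%:R * (zz 0) * (zz 5) - 2%:R * (yy 5) * (zz 0) - 2%:R * (yy 4) * (zz 1) - 2%:R * (yy 3) * (zz 2) - 2%:R * (yy 2) * (zz 3) - 2%:R * (yy 1) * (zz 4) - (yy 0) * (zz 5) - (xx 5) * (zz 0) - (xx 4) * (zz 1) - (xx 3) * (zz 2) - (xx 2) * (zz 3)) * (yy 0) + ((- (yy 5) * (zz 0) - 2%:R * (yy 4) * (zz 1) -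 2%:R * (yy 3) * (zz 2) - 2%:R * (yy 2) * (zz 3) - 2%:R * (yy 2) * (yy 3) - 2%:R * (yy 1) * (zz 4) - 2%:R * (yy 1) * (yy 4) - (xx 4) * (yy 1) - (xx 3) * (yy 2) - (xx 2) * (yy 3)) * (zz 0) + ((- (yy 3) * (zz 1) - 2%:R * (yy 2) * (zz 2) - (yy 2)^+2 - 2%:R * (yy 1) * (zz 3) - (yy 1) * (yy 3) - (xx 3) * (yy 1) - (xx 2) * (yy 2)) * (yy 1 + zz 1) + (1 * gjR 5 + 0)))))) + 2%:R * ((yy 1) * (yy 2) * (zz 2) + (yy 1) * (yy 2)^+2 + (yy 1)^+2 * (zz 3) + (yy 1)^+2 * (yy 3) + (xx 3) * (yy 1)^+2 + (xx 2) * (yy 1) * (yy 2) - (xx 2) * (xx 3))); last exact: char2_drop.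
  rewrite g5E /gform /c2 !big_ord_recr !big_ord0 /= /f3.
  ring.
rewrite E.
apply: (@in_ideal_add _ _ _ 0%N) => //.
apply: (@in_ideal_add _ _ _ 1%N) => //.
apply: (@in_ideal_add _ _ _ 2%N) => //.
apply: (@in_ideal_add _ _ _ 3%N) => //.
apply: (@in_ideal_add _ _ _ 4%N) => //.
apply: in_ideal_g => //.
exact: in_ideal0.
Qed.

Lemma g4E : gjR 4 = xx 2 ^+ 2 + (((yy 4) * (zz 0) + (yy 3) * (zz 1) + (yy 2) * (zz 2) + (yy 1) * (zz 3) + (yy 0) * (zz 4) + 2%:R * (xx 4)) * (xx 0) + (((yy 3) * (zz 0) + (yy 2) * (zz 1) + (yy 1) * (zz 2) + (yy 0) * (zz 3) + 2%:R * (xx 3)) * (xx 1) + (((zz 2)^+2 + 2%:R * (zz 1) * (zz 3) + 2%:R * (zz 0) * (zz 4) + 2%:R * (yy 4) * (zz 0) + 2%:R * (yy 3) * (zz 1) + 2%:R * (yy 2) * (zz 2) + 2%:R * (yy 1) * (zz 3) + (yy 0) * (zz 4) + (xx 4) * (zz 0) + (xx 3) * (zz 1) + (xx 2) * (zz 2)) * (yy 0) + ((2%:R * (zz 1) * (zz 2) + 2%:R * (zz 0) * (zz 3) + 2%:R * (yy 3) * (zz 0) + 2%:R * (yy 2) * (zz 1) + (yy 1) * (zz 2) + (xx 3) * (zz 0) + (xx 2) * (zz 1)) * (yy 1) + (((yy 4) * (zz 0) + 2%:R * (yy 3) * (zz 1) + 2%:R * (yy 2) * (zz 2) + (yy 2)^+2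 + (xx 2) * (yy 2)) * (zz 0) + (((yy 2) * (zz 1)) * (zz 1) + (0))))))).
Proof.
rewrite gjE; last lia.
rewrite /gform /c2 !big_ord_recr !big_ord0 /=.
ring.
Qed.

Lemma le5 i : (i <= 5)%N -> (i <= m)%N.
Proof. by move=> hi; apply: leq_trans hi hm. Qed.

Lemma ev_x5 px py pz i : (i <= 5)%N -> (xx i).@[mkpt px py pz] = px i.
Proof. by move=> hi; apply: ev_x; apply: le5. Qed.
Lemma ev_y5 px py pz i : (i <= 5)%N -> (yy i).@[mkpt px py pz] = py i.
Proof. by move=> hi; apply: ev_y; apply: le5. Qed.
Lemma ev_z5 px py pz i : (i <= 5)%N -> (zz i).@[mkpt px py pz] = pz i.
Proof. by move=> hi; apply: ev_z; apply: le5. Qed.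

Lemma mkpt_lin px py pz wx wy wz (t : k) j :
  mkpt px py pz j + t * mkpt wx wy wz j =
  mkpt (fun i => px i + t * wx i) (fun i => py i + t * wy i) (fun i => pz i + t * wz i) j.
Proof. by rewrite /mkpt; case: ifP => _ //; case: ifP. Qed.

Lemma sat_gj (lin : seq R) h v : zeroset (in_sat (lin ++ gjs) h) v ->
  forall j, (j <= m)%N -> (gjR j).@[v] = 0.
Proof.
move=> H j hj; rewrite -(nth_gjs lin hj); apply: (sat_van H).
by apply: size_lin_gjs; rewrite ltn_add2l ltnS.
Qed.

Lemma Z0_of v :
  (xx 0).@[v] = 0 -> (xx 1).@[v] = 0 -> (yy 0).@[v] = 0 -> (yy 1).@[v] = 0 ->
  (zz 0).@[v] = 0 -> (zz 1).@[v] = 0 -> (forall j, (j <= m)%N -> (gjR j).@[v] = 0) ->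
  zeroset (@I0 k m) v.
Proof.
move=> x0 x1 y0 y1 z0 z1 Hg.
have x2 : (xx 2).@[v] = 0.
  have := Hg 4%N (@le5 4%N isT); rewrite g4E !mevalD !mevalM x0 x1 y0 y1 z0 z1.
  rewrite !mulr0 meval0 !addr0 => /eqP; rewrite mulf_eq0 orbb => /eqP //.
move=> f Hf; apply: (in_ideal_ev _ Hf); apply: van_lin_gjs => // i.
by case: i => [|[|[|[|[|[|[|i]]]]]]] //=.
Qed.

Definition dl (n : nat) : nat -> k := fun i => ((i == n)%:R : k).
Definition z0f : nat -> k := fun _ => 0.

Lemma Z0_mk py pz : py 0%N = 0 -> py 1%N = 0 -> pz 0%N = 0 -> pz 1%N = 0 ->
  ((forall i, py i = 0) \/ (forall i, pz i = 0) \/ (forall i, py i = pz i)) ->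
  zeroset (@I0 k m) (mkpt z0f py pz).
Proof.
move=> a b c d H; apply: Z0_of; rewrite ?ev_z5 ?ev_y5 ?ev_x5 //.
by move=> j _; apply: gj_van.
Qed.

Definition P1 := mkpt z0f z0f (dl 2).
Definition P2 := mkpt z0f (dl 2) z0f.
Definition P3 := mkpt z0f (dl 2) (dl 2).

Lemma P1_0 : zeroset (@I0 k m) P1.
Proof. by apply: Z0_mk => //; left. Qed.
Lemma P2_0 : zeroset (@I0 k m) P2.
Proof. by apply: Z0_mk => //; right; left. Qed.
Lemma P3_0 : zeroset (@I0 k m) P3.
Proof. by apply: Z0_mk => //; right; right. Qed.

Lemma P1_1 : zeroset (@I1 k m) P1.
Proof.
move=> f Hf; apply: (curve (w := mkpt z0f z0f (dl 1))) Hf => t t0.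
set V := mkpt (fun i => z0f i + t * z0f i) (fun i => z0f i + t * z0f i)
   (fun i => dl 2 i + t * dl 1 i).
have E g : g.@[fun j => P1 j + t * mkpt z0f z0f (dl 1) j] = g.@[V].
  by apply: meval_eq => j; rewrite /P1 mkpt_lin.
split.
  move=> i hi; rewrite E; move: i hi.
  apply: van_lin_gjs => [i|j hj].
    by case: i => [|[|[|[|[|i]]]]] //= _; rewrite ?ev_z5 ?ev_y5 ?ev_x5 //= /z0f /dl /= ?mulr0 ?addr0.
  by apply: gj_van => [i|]; [rewrite /z0f mulr0 addr0 | left => i; rewrite /z0f mulr0 addr0].
by rewrite E ev_z5 // /dl /= add0r mulr1.
Qed.

Lemma P2_2 : zeroset (@I2 k m) P2.
Proof.
move=> f Hf; apply: (curve (w := mkpt z0f (dl 1) z0f)) Hf => t t0.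
set V := mkpt (fun i => z0f i + t * z0f i) (fun i => dl 2 i + t * dl 1 i)
   (fun i => z0f i + t * z0f i).
have E g : g.@[fun j => P2 j + t * mkpt z0f (dl 1) z0f j] = g.@[V].
  by apply: meval_eq => j; rewrite /P2 mkpt_lin.
split.
  move=> i hi; rewrite E; move: i hi.
  apply: van_lin_gjs => [i|j hj].
    by case: i => [|[|[|[|[|i]]]]] //= _; rewrite ?ev_z5 ?ev_y5 ?ev_x5 //= /z0f /dl /= ?mulr0 ?addr0.
  by apply: gj_van => [i|]; [rewrite /z0f mulr0 addr0 | right; left => i; rewrite /z0f mulr0 addr0].
by rewrite E ev_y5 // /dl /= add0r mulr1.
Qed.

Lemma P3_3 : zeroset (@I3 k m) P3.
Proof.
move=> f Hf; apply: (curve (w := mkpt z0f (dl 1) (dl 1))) Hf => t t0.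
set V := mkpt (fun i => z0f i + t * z0f i) (fun i => dl 2 i + t * dl 1 i)
   (fun i => dl 2 i + t * dl 1 i).
have E g : g.@[fun j => P3 j + t * mkpt z0f (dl 1) (dl 1) j] = g.@[V].
  by apply: meval_eq => j; rewrite /P3 mkpt_lin.
split.
  move=> i hi; rewrite E; move: i hi.
  apply: van_lin_gjs => [i|j hj].
    case: i => [|[|[|[|[|i]]]]] //= _; rewrite ?mevalD ?ev_z5 ?ev_y5 ?ev_x5 //= /z0f /dl /= ?mulr0 ?addr0 //.
    by rewrite add0r mulr1 -mulr2n -mulr_natr two0 mulr0.
  by apply: gj_van => [i|]; [rewrite /z0f mulr0 addr0 | right; right].
by rewrite E ev_y5 // /dl /= add0r mulr1.
Qed.

Ltac evf := rewrite ?(mevalD, mevalM) ?ev_z5 ?ev_y5 ?ev_x5 //= /z0f /dl /=;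
  rewrite ?(mulr0n, mulr1n, mulr0, mul0r, addr0, add0r, mulr1, mul1r, expr1n) => /eqP; apply/negP; exact: oner_neq0.

Lemma P1_2 : ~ zeroset (@I2 k m) P1.
Proof. by move=> H; have := H _ f2_I2; rewrite /f2; evf. Qed.
Lemma P1_3 : ~ zeroset (@I3 k m) P1.
Proof. by move=> H; have := H _ f3_I3; rewrite /f3; evf. Qed.
Lemma P2_1 : ~ zeroset (@I1 k m) P2.
Proof. by move=> H; have := H _ f1_I1; rewrite /f1; evf. Qed.
Lemma P2_3 : ~ zeroset (@I3 k m) P2.
Proof. by move=> H; have := H _ f3_I3; rewrite /f3; evf. Qed.
Lemma P3_1 : ~ zeroset (@I1 k m) P3.
Proof. by move=> H; have := H _ f1_I1; rewrite /f1; evf. Qed.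
Lemma P3_2 : ~ zeroset (@I2 k m) P3.
Proof. by move=> H; have := H _ f2_I2; rewrite /f2; evf. Qed.

Lemma sub12 v : zeroset (@I1 k m) v -> zeroset (@I2 k m) v -> zeroset (@I0 k m) v.
Proof.
move=> H1 H2; apply: Z0_of.
- exact: (@sat_van (J1 k m) (zz 1) v H1 0%N isT).
- exact: (@sat_van (J1 k m) (zz 1) v H1 1%N isT).
- exact: (@sat_van (J1 k m) (zz 1) v H1 2%N isT).
- exact: (@sat_van (J1 k m) (zz 1) v H1 3%N isT).
- exact: (@sat_van (J1 k m) (zz 1) v H1 4%N isT).
- exact: (@sat_van (J2 k m) (yy 1) v H2 4%N isT).
- exact: (sat_gj (lin := [:: xx 0; xx 1; yy 0; yy 1; zz 0]) H1).
Qed.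

Lemma sub23 v : zeroset (@I2 k m) v -> zeroset (@I3 k m) v -> zeroset (@I0 k m) v.
Proof.
move=> H2 H3.
have z1 : (zz 1).@[v] = 0 by exact: (@sat_van (J2 k m) (yy 1) v H2 4%N isT).
have y1 : (yy 1).@[v] = 0.
  have := @sat_van (J3 k m) (yy 1) v H3 4%N isT; rewrite /= mevalD z1 addr0; exact.
apply: Z0_of => //.
- exact: (@sat_van (J2 k m) (yy 1) v H2 0%N isT).
- exact: (@sat_van (J2 k m) (yy 1) v H2 1%N isT).
- exact: (@sat_van (J2 k m) (yy 1) v H2 2%N isT).
- exact: (@sat_van (J2 k m) (yy 1) v H2 3%N isT).
- exact: (sat_gj (lin := [:: xx 0; xx 1; yy 0; zz 0; zz 1]) H2).
Qed.

Lemma sub31 v : zeroset (@I3 k m) v -> zeroset (@I1 k m) v -> zeroset (@I0 k m) v.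
Proof.
move=> H3 H1.
have y1 : (yy 1).@[v] = 0 by exact: (@sat_van (J1 k m) (zz 1) v H1 3%N isT).
have z1 : (zz 1).@[v] = 0.
  have := @sat_van (J3 k m) (yy 1) v H3 4%N isT; rewrite /= mevalD y1 add0r; exact.
apply: Z0_of => //.
- exact: (@sat_van (J1 k m) (zz 1) v H1 0%N isT).
- exact: (@sat_van (J1 k m) (zz 1) v H1 1%N isT).
- exact: (@sat_van (J1 k m) (zz 1) v H1 2%N isT).
- exact: (@sat_van (J1 k m) (zz 1) v H1 4%N isT).
- exact: (sat_gj (lin := [:: xx 0; xx 1; yy 0; yy 1; zz 0]) H1).
Qed.

Lemma Zi0 v : Z (inord 0 : 'I_4) v <-> zeroset (@I0 k m) v.
Proof.
have e : val (inord 0 : 'I_4) = 0%N by exact: inordK.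
by rewrite /Z /Iideal e.
Qed.
Lemma Zi1 v : Z (inord 1 : 'I_4) v <-> zeroset (@I1 k m) v.
Proof.
have e : val (inord 1 : 'I_4) = 1%N by exact: inordK.
by rewrite /Z /Iideal e.
Qed.
Lemma Zi2 v : Z (inord 2 : 'I_4) v <-> zeroset (@I2 k m) v.
Proof.
have e : val (inord 2 : 'I_4) = 2%N by exact: inordK.
by rewrite /Z /Iideal e.
Qed.
Lemma Zi3 v : Z (inord 3 : 'I_4) v <-> zeroset (@I3 k m) v.
Proof.
have e : val (inord 3 : 'I_4) = 3%N by exact: inordK.
by rewrite /Z /Iideal e.
Qed.

Lemma main_body :
  let W := ZZ (k := k) (m := m) in
  let i0 : 'I_4 := inord 0 in let i1 : 'I_4 := inord 1 in
  let i2 : 'I_4 := inord 2 in let i3 : 'I_4 := inord 3 in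
  (forall A, maximal_pair W A <->
     (pseteq A (W i0 i1) \/ pseteq A (W i0 i2) \/ pseteq A (W i0 i3))) /\
  ~ pseteq (W i0 i1) (W i0 i2) /\ ~ pseteq (W i0 i2) (W i0 i3) /\
  ~ pseteq (W i0 i1) (W i0 i3) /\
  (psubset (W i1 i2) (Z i0) /\ ~ pseteq (W i1 i2) (Z (m := m) i0)) /\
  (psubset (W i2 i3) (Z i0) /\ ~ pseteq (W i2 i3) (Z (m := m) i0)) /\
  (psubset (W i3 i1) (Z i0) /\ ~ pseteq (W i3 i1) (Z (m := m) i0)).
Proof.
move=> W i0 i1 i2 i3.
have HW : forall i j v, W i j v <-> Z i v /\ Z j v by [].
have cov : forall i : 'I_4, [\/ i = i0, i = i1, i = i2 | i = i3].
  move=> i; case: i => [[|[|[|[|n]]]] Hi] //.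
  - by constructor 1; apply: ord_inj; rewrite /= inordK.
  - by constructor 2; apply: ord_inj; rewrite /= inordK.
  - by constructor 3; apply: ord_inj; rewrite /= inordK.
  - by constructor 4; apply: ord_inj; rewrite /= inordK.
have nv : forall a b : nat, (a < 4)%N -> (b < 4)%N -> a != b ->
    (inord a : 'I_4) <> inord b.
  by move=> a b ha hb nab /(congr1 (@nat_of_ord 4)); rewrite !inordK //; apply/eqP.
have s12 : forall v : pt, Z i1 v -> Z i2 v -> Z i0 v.
  move=> v h1 h2; apply: (iffRL (Zi0 v)); apply: sub12; [exact: (iffLR (Zi1 v) h1) | exact: (iffLR (Zi2 v) h2)].
have s23 : forall v : pt, Z i2 v -> Z i3 v -> Z i0 v.
  move=> v h1 h2; apply: (iffRL (Zi0 v)); apply: sub23; [exact: (iffLR (Zi2 v) h1) | exact: (iffLR (Zi3 v) h2)].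
have s31 : forall v : pt, Z i3 v -> Z i1 v -> Z i0 v.
  move=> v h1 h2; apply: (iffRL (Zi0 v)); apply: sub31; [exact: (iffLR (Zi3 v) h1) | exact: (iffLR (Zi1 v) h2)].
have := @combi _ (@Z k m) W i0 i1 i2 i3 HW cov (nv 0 1 isT isT isT)
  (nv 0 2 isT isT isT) (nv 0 3 isT isT isT) (nv 1 2 isT isT isT) (nv 1 3 isT isT isT)
  (nv 2 3 isT isT isT) s12 s23 s31 P1 P2 P3.
apply.
- exact: (iffRL (Zi0 _) P1_0).
- exact: (iffRL (Zi1 _) P1_1).
- by move=> h; apply: P1_2; exact: (iffLR (Zi2 _) h).
- by move=> h; apply: P1_3; exact: (iffLR (Zi3 _) h).
- exact: (iffRL (Zi0 _) P2_0).
- exact: (iffRL (Zi2 _) P2_2).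
- by move=> h; apply: P2_1; exact: (iffLR (Zi1 _) h).
- by move=> h; apply: P2_3; exact: (iffLR (Zi3 _) h).
- exact: (iffRL (Zi0 _) P3_0).
- exact: (iffRL (Zi3 _) P3_3).
- by move=> h; apply: P3_1; exact: (iffLR (Zi1 _) h).
- by move=> h; apply: P3_2; exact: (iffLR (Zi2 _) h).
Qed.
End Main.

Theorem theorem4p13 (k : closedFieldType) (hk : 2%N \in [pchar k]) (m : nat)
    (hm : (5 <= m)%N) :
  let W := ZZ (k := k) (m := m) in
  let i0 : 'I_4 := inord 0 in let i1 : 'I_4 := inord 1 in
  let i2 : 'I_4 := inord 2 in let i3 : 'I_4 := inord 3 in
  (forall A, maximal_pair W A <->
     (pseteq A (W i0 i1) \/ pseteq A (W i0 i2) \/ pseteq A (W i0 i3))) /\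
  ~ pseteq (W i0 i1) (W i0 i2) /\ ~ pseteq (W i0 i2) (W i0 i3) /\
  ~ pseteq (W i0 i1) (W i0 i3) /\
  (psubset (W i1 i2) (Z i0) /\ ~ pseteq (W i1 i2) (Z (m := m) i0)) /\
  (psubset (W i2 i3) (Z i0) /\ ~ pseteq (W i2 i3) (Z (m := m) i0)) /\
  (psubset (W i3 i1) (Z i0) /\ ~ pseteq (W i3 i1) (Z (m := m) i0)).
Proof. exact: (@main_body k m hk hm). Qed.
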